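(* Let $G$ be an interval graph and $D_s\neq D_t$ dominating multisets of $G$ with $|D_s|=|D_t|$. Then there exists a minimum-cost matching $M'$ between $D_s$ and $D_t$ such that at least one of the following holds: (i) there are $(u,v)\in M'$ and $u'\in\mathrm{succ}(u,v)$ such that $\mathrm{slide}(D_s,u,u')$ is dominating; (ii) there are $(u,v)\in M'$ and $v'\in\mathrm{succ}(v,u)$ such that $\mathrm{slide}(D_t,v,v')$ is dominating.
   Context: A multiset $H$ of vertices is a function $H:V\to\mathbb{N}\cup\{0\}$; it is dominating if its support $\{v:H(v)\ge1\}$ is a dominating set. $\mathrm{slide}(D,u,w)=(D\setminus\{u\})\cup\{w\}$. $\mathrm{succ}(u,w)$ is the set of vertices following $u$ on some shortest path from $u$ to $w$, with $\mathrm{succ}(u,u)=\emptyset$. A matching between equal-size multisets $D_s,D_t$ is a multiset $M$ on $V\times V$ with exactly $D_s(v)$ pairs $(v,\cdot)$ and $D_t(v)$ pairs $(\cdot,v)$ for each $v$; cost $c(M)=\sum_{(x,y)}d_G(x,y)M(x,y)$; a minimum-cost matching minimizes this cost. (The graph is assumed connected so that costs are finite.) *)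

(* Defs.v *)
From mathcomp Require Import all_boot all_order all_algebra.
Set Implicit Arguments. Unset Strict Implicit. Unset Printing Implicit Defensive.
Import Order.TTheory GRing.Theory Num.Theory.

(* A simple graph on a finite vertex type T is a symmetric irreflexive
   relation e : rel T. *)

Definition interval_graph (T : finType) (e : rel T) : Prop :=
  exists I : T -> rat * rat,
    (forall x, ((I x).1 <= (I x).2)%R) /\
    (forall x y, x != y ->
       e x y = (((I x).1 <= (I y).2)%R && ((I y).1 <= (I x).2)%R)).

Definition connected_graph (T : finType) (e : rel T) : Prop :=
  forall x y, connect e x y.

Fixpoint walk (T : finType) (e : rel T) (k : nat) (x y : T) : bool :=
  match k with
  | 0 => x == y
  | k'.+1 => [exists z, e x z && walk e k' z y]
  end.

(* Shortest-path distance d_G(x,y): least k with a walk of length k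
   (searched in 0 .. #|T|-1, which suffices for connected graphs). *)
Definition dist (T : finType) (e : rel T) (x y : T) : nat :=
  find (fun k => walk e k x y) (iota 0 #|T|).

Definition succ (T : finType) (e : rel T) (u w z : T) : Prop :=
  exists p : seq T, [&& path e u (z :: p), last z p == w &
                       (size p).+1 == dist e u w].

Definition mset (T : finType) := T -> nat.

Definition msize (T : finType) (H : mset T) : nat := (\sum_(v : T) H v)%N.

Definition dominating (T : finType) (e : rel T) (H : mset T) : Prop :=
  forall v : T, exists u : T, (1 <= H u)%N /\ (u = v \/ e u v).

Definition slide (T : finType) (D : mset T) (u w : T) : mset T :=
  fun x => (D x - (x == u) + (x == w))%N.

(* A matching between Ds and Dt: a multiset of pairs M *)
Definition is_matching (T : finType) (Ds Dt : mset T) (M : T -> T -> nat) : Prop :=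
  (forall v, (\sum_(y : T) M v y)%N = Ds v) /\
  (forall v, (\sum_(x : T) M x v)%N = Dt v).

Definition mcost (T : finType) (e : rel T) (M : T -> T -> nat) : nat :=
  (\sum_(x : T) \sum_(y : T) dist e x y * M x y)%N.

Definition min_cost_matching (T : finType) (e : rel T) (Ds Dt : mset T)
    (M : T -> T -> nat) : Prop :=
  is_matching Ds Dt M /\
  forall M', is_matching Ds Dt M' -> (mcost e M <= mcost e M')%N.

(* Main.v *)
Require Import Defs.
From mathcomp Require Import all_boot all_order all_algebra.
From mathcomp Require Import lra zify.
From Stdlib Require Import Classical FunctionalExtensionality.
Set Implicit Arguments. Unset Strict Implicit. Unset Printing Implicit Defensive.
Import Order.TTheory GRing.Theory Num.Theory.
Section Dist.
Variables (T : finType) (e : rel T).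
Hypothesis e_sym : symmetric e.
Hypothesis e_conn : connected_graph e.

Lemma walkP k x y : walk e k x y <-> exists p, [/\ path e x p, last x p = y & size p = k].
Proof.
elim: k x => [|k IH] x /=.
  split; first by move/eqP=> ->; exists [::].
  by case=> [[|z p]] [] //= _ -> _.
split.
  case/existsP=> z /andP[exz] /IH [p [pp lp sp]].
  by exists (z :: p); rewrite /= exz pp lp sp.
case=> [[|z p]] [] //= /andP[exz pp] lp [sp].
apply/existsP; exists z; rewrite exz /=; apply/IH; by exists p.
Qed.

Lemma dist_walk x y : walk e (dist e x y) x y /\ (dist e x y < #|T|)%N.
Proof.
have [p pp lp] : exists2 p, path e x p & y = last x p.
  by apply/connectP; apply: e_conn.
move: lp; case: (shortenP pp) => p' pp' up' _ lp'.
have szp : (size p' < #|T|)%N.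
  have /card_uniqP H := up'.
  by rewrite -ltnS -[(size p').+1]/(size (x :: p')) -H; apply: max_card.
have hw : walk e (size p') x y by apply/walkP; exists p'; rewrite lp'.
have hh : has (fun k => walk e k x y) (iota 0 #|T|).
  by apply/hasP; exists (size p'); rewrite // mem_iota.
have := nth_find 0 hh; have := hh; rewrite has_find size_iota => hf.
by rewrite nth_iota // add0n => ->.
Qed.

Lemma dist_min k x y : walk e k x y -> (dist e x y <= k)%N.
Proof.
move=> hw; case: (dist_walk x y) => _ hd.
rewrite leqNgt; apply/negP => hk.
have := before_find 0 hk; rewrite nth_iota ?add0n ?hw //.
by apply: ltn_trans hd.
Qed.

Lemma dist_path x p : path e x p -> (dist e x (last x p) <= size p)%N.
Proof. by move=> pp; apply: dist_min; apply/walkP; exists p. Qed.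

Lemma dist_ex x y : exists p, [/\ path e x p, last x p = y & size p = dist e x y].
Proof. by apply/walkP; case: (dist_walk x y). Qed.

Lemma dist_tri x y z : (dist e x z <= dist e x y + dist e y z)%N.
Proof.
case: (dist_ex x y) => p [pp lp sp]; case: (dist_ex y z) => q [pq lq sq].
have := @dist_path x (p ++ q); rewrite cat_path pp lp pq last_cat lp lq size_cat sp sq.
by apply.
Qed.

Lemma dist_sym x y : dist e x y = dist e y x.
Proof.
suff H : forall a b, (dist e a b <= dist e b a)%N by apply/eqP; rewrite eqn_leq !H.
move=> a b; case: (dist_ex b a) => p [pp lp sp].
have h2 : path e (last b p) (rev (belast b p)).
  rewrite rev_path; apply: sub_path pp => u v; by rewrite e_sym.
have := dist_path h2; rewrite lp size_rev size_belast sp.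
suff -> : last a (rev (belast b p)) = b by [].
by rewrite -lp; case: (p) => [|z q] //=; rewrite rev_cons last_rcons.
Qed.

Lemma dist0 x : dist e x x = 0%N.
Proof. by apply/eqP; rewrite -leqn0; apply: dist_min => /=. Qed.

Lemma dist0_eq x y : dist e x y = 0%N -> x = y.
Proof. by move=> h; have [] := dist_walk x y; rewrite h /= => /eqP. Qed.

Lemma dist_edge x y : e x y -> (dist e x y <= 1)%N.
Proof. move=> h; apply: dist_min => /=; apply/existsP; exists y; by rewrite h eqxx. Qed.

Lemma dist_pos x y : x != y -> (0 < dist e x y)%N.
Proof. move=> h; rewrite lt0n; apply/eqP => /dist0_eq /eqP; by rewrite (negbTE h). Qed.

Lemma dist1_edge x y : dist e x y = 1%N -> e x y.
Proof.
move=> h; have [] := dist_walk x y; rewrite h /= => /existsP[z /andP[exz /eqP <-]] _ //.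
Qed.

Lemma succ_of x y z : e x z -> dist e z y = (dist e x y).-1 -> (0 < dist e x y)%N ->
  succ e x y z.
Proof.
move=> exz hd hpos; case: (dist_ex z y) => p [pp lp sp].
exists p; rewrite /= exz pp lp eqxx /= sp hd; by rewrite prednK.
Qed.

Lemma succ_ex x y : x != y -> exists z, succ e x y z.
Proof.
move=> hxy; case: (dist_ex x y) => [[|z p]] [/= pp lp sp].
  by move: hxy; rewrite -lp eqxx.
exists z, p; move: pp => /andP[exz pp]; by rewrite /= exz pp lp eqxx sp eqxx.
Qed.

End Dist.
Section Interval.
Variables (T : finType) (e : rel T).
Hypothesis e_sym : symmetric e.
Hypothesis e_irr : irreflexive e.
Hypothesis e_conn : connected_graph e.
Variables (l r : T -> rat).
Hypothesis hI : forall x, (l x <= r x)%R.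
Hypothesis hE : forall x y, x != y -> e x y = ((l x <= r y)%R && (l y <= r x)%R).

Lemma edge_neq x y : e x y -> x != y.
Proof. by apply: contraTneq => ->; rewrite e_irr. Qed.

Lemma edge_int x y : e x y -> (l x <= r y)%R /\ (l y <= r x)%R.
Proof. by move=> h; move: (h); rewrite hE ?edge_neq // => /andP. Qed.

Lemma int_edge x y : x != y -> (l x <= r y)%R -> (l y <= r x)%R -> e x y.
Proof. by move=> hxy h1 h2; rewrite hE // h1 h2. Qed.

Lemma ML_aux a c p : forall b, path e b p -> last b p = c -> (r b <= r a)%R -> (r a < l c)%R ->
  (dist e a c <= size p)%N.
Proof.
elim: p => [|y p IH] b /=.
  move=> _ <- h1 h2; have := hI b; lra.
case/andP=> eby pp lp h1 h2.
have [hy|hy] := lerP (r y) (r a); first by apply: leq_trans (IH y pp lp hy h2) _.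
have [_ lyb] := edge_int eby.
case: (eqVneq y a) => [<-|hya].
  by have := dist_path e_conn pp; rewrite lp => h; apply: leq_trans h _.
have eya : e y a by apply: int_edge => //; have := hI a; lra.
apply: leq_trans (dist_tri e_conn a y c) _.
rewrite -add1n leq_add //; first by apply: (dist_edge e_conn); rewrite e_sym.
by rewrite -lp; apply: (dist_path e_conn).
Qed.

Lemma ML a b c : (r b <= r a)%R -> (r a < l c)%R -> (dist e a c <= dist e b c)%N.
Proof.
move=> h1 h2; case: (dist_ex e_conn b c) => p [pp lp sp].
by rewrite -sp; apply: ML_aux pp lp h1 h2.
Qed.

End Interval.
Lemma prop_min (P : nat -> Prop) : (exists n, P n) -> exists n, P n /\ forall m, P m -> (n <= m)%N.
Proof.
move=> [n0 Pn0]; apply: NNPP => hno.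
suff H : forall n m, (m <= n)%N -> ~ P m by apply: (H n0 n0).
elim=> [|n IH] m hm Pm.
  apply: hno; exists m; split => // k _; by move: hm; rewrite leqn0 => /eqP ->.
have [hlt|hge] := ltnP m n.+1; first by apply: (IH m) => //.
have hmn : m = n.+1 by apply/eqP; rewrite eqn_leq hm hge.
subst m; apply: hno; exists n.+1; split => // k Pk; rewrite leqNgt; apply/negP => hk.
by apply: (IH k) => //.
Qed.

Lemma prop_max (P : nat -> Prop) B : (exists n, P n) -> (forall n, P n -> (n <= B)%N) ->
  exists n, P n /\ forall m, P m -> (m <= n)%N.
Proof.
move=> [n0 Pn0] hB.
have [k [[Pk kB] hk]] := @prop_min (fun k => P (B - k) /\ (k <= B)%N)
  (ex_intro _ (B - n0) (conj (eq_ind_r P Pn0 (subKn (hB _ Pn0))) (leq_subr _ _))).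
exists (B - k); split => // m Pm.
have := hk (B - m) (conj (eq_ind_r P Pm (subKn (hB _ Pm))) (leq_subr _ _)).
have := hB _ Pm; lia.
Qed.

Section Matching.
Variables (T : finType) (e : rel T).
Hypothesis e_sym : symmetric e.
Hypothesis e_conn : connected_graph e.
Local Notation d := (dist e).

Lemma sum_eq1 (F : T -> nat) b : (\sum_(y : T) F y * (y == b) = F b)%N.
Proof.
rewrite (bigD1 b) //= eqxx muln1 big1 ?addn0 // => y /negbTE ->; by rewrite muln0.
Qed.

Lemma pair_nat (x y a b : T) : (nat_of_bool ((x, y) == (a, b)) = nat_of_bool (x == a) * (y == b))%N.
Proof. by rewrite xpair_eqE; case: (x == a); case: (y == b). Qed.

Lemma sum_row1 (x a b : T) : (\sum_(y : T) nat_of_bool ((x, y) == (a, b)) = (x == a))%N.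
Proof. under eq_bigr => y _ do rewrite pair_nat; exact: (sum_eq1 (fun _ => nat_of_bool (x == a))). Qed.

Lemma sum_col1 (y a b : T) : (\sum_(x : T) nat_of_bool ((x, y) == (a, b)) = (y == b))%N.
Proof. under eq_bigr => x _ do rewrite pair_nat mulnC; exact: (sum_eq1 (fun _ => nat_of_bool (y == b)) a). Qed.

Lemma sum2_1 (F : T -> T -> nat) a b :
  (\sum_(x : T) \sum_(y : T) F x y * ((x, y) == (a, b)) = F a b)%N.
Proof.
under eq_bigr => x _ do (under eq_bigr => y _ do rewrite pair_nat mulnA; rewrite sum_eq1).
by rewrite sum_eq1.
Qed.

Definition exch (M : T -> T -> nat) a b c d' : T -> T -> nat :=
  fun x y => (M x y + ((x, y) == (a, d')) + ((x, y) == (c, b))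
              - ((x, y) == (a, b)) - ((x, y) == (c, d')))%N.

Lemma exch_key M a b c d' x y : (0 < M a b)%N -> (0 < M c d')%N -> (a, b) != (c, d') ->
  (exch M a b c d' x y + ((x, y) == (a, b)) + ((x, y) == (c, d')) =
   M x y + ((x, y) == (a, d')) + ((x, y) == (c, b)))%N.
Proof.
move=> h1 h2 hne; rewrite /exch.
have : (nat_of_bool ((x, y) == (a, b)) + ((x, y) == (c, d')) <= M x y)%N.
  case: ((x, y) =P (a, b)) => [E|_]; case: ((x, y) =P (c, d')) => [E'|_] /=.
  - by move: hne; rewrite -E -E' eqxx.
  - by case: E => -> ->; rewrite addn0.
  - by case: E' => -> ->; rewrite add0n.
  - by [].
lia.
Qed.

Lemma exch_matching (Ds Dt : mset T) (M : T -> T -> nat) (a b c d' : T) : is_matching Ds Dt M ->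
  (0 < M a b)%N -> (0 < M c d')%N -> (a, b) != (c, d') ->
  is_matching Ds Dt (exch M a b c d').
Proof.
move=> [hr hc] h1 h2 hne; split.
  move=> v; rewrite -hr.
  have E : (\sum_(y : T) (exch M a b c d' v y + ((v, y) == (a, b)) + ((v, y) == (c, d'))) =
            \sum_(y : T) (M v y + ((v, y) == (a, d')) + ((v, y) == (c, b))))%N.
    by apply: eq_bigr => y _; apply: exch_key.
  move: E; rewrite !big_split /= !sum_row1; lia.
move=> v; rewrite -hc.
have E : (\sum_(x : T) (exch M a b c d' x v + ((x, v) == (a, b)) + ((x, v) == (c, d'))) =
          \sum_(x : T) (M x v + ((x, v) == (a, d')) + ((x, v) == (c, b))))%N.
  by apply: eq_bigr => x _; apply: exch_key.
move: E; rewrite !big_split /= !sum_col1; lia.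
Qed.

Lemma exch_cost M a b c d' : (0 < M a b)%N -> (0 < M c d')%N -> (a, b) != (c, d') ->
  (mcost e (exch M a b c d') + d a b + d c d' = mcost e M + d a d' + d c b)%N.
Proof.
move=> h1 h2 hne; rewrite /mcost.
have H : forall x y, (d x y * exch M a b c d' x y + d x y * ((x, y) == (a, b)) +
     d x y * ((x, y) == (c, d')) = d x y * M x y + d x y * ((x, y) == (a, d')) +
     d x y * ((x, y) == (c, b)))%N.
  by move=> x y; rewrite -!mulnDr exch_key.
have E : (\sum_(x : T) \sum_(y : T) (d x y * exch M a b c d' x y + d x y * ((x, y) == (a, b)) +
     d x y * ((x, y) == (c, d'))) = \sum_(x : T) \sum_(y : T) (d x y * M x y + d x y * ((x, y) == (a, d')) +
     d x y * ((x, y) == (c, b))))%N.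
  by apply: eq_bigr => x _; apply: eq_bigr => y _; apply: H.
move: E.
under eq_bigr => x _ do rewrite !big_split /=.
under [X in _ = X -> _]eq_bigr => x _ do rewrite !big_split /=.
rewrite !big_split /= !sum2_1; lia.
Qed.

Lemma sum_pos_ex (F : T -> nat) : (0 < \sum_(y : T) F y)%N -> exists y, (0 < F y)%N.
Proof.
move=> h; apply: NNPP => hn; move: h; rewrite big1 // => y _.
by apply/eqP; rewrite -leqn0 leqNgt; apply/negP => hy; apply: hn; exists y.
Qed.

Lemma sum_minus1 (D : T -> nat) a : (0 < D a)%N ->
  (\sum_(v : T) (D v - (v == a)) + 1 = \sum_(v : T) D v)%N.
Proof.
move=> ha; have H : forall v, (D v - (v == a) + (v == a) = D v)%N.
  move=> v; case: eqP => [->|_]; lia.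
have E : (\sum_(v : T) D v = \sum_(v : T) ((D v - (v == a)) + (v == a)))%N.
  by apply: eq_bigr => v _; rewrite H.
have E1 : (\sum_(v : T) nat_of_bool (v == a) = 1)%N.
  rewrite -(sum_eq1 (fun _ => 1%N) a); apply: eq_bigr => v _; by rewrite mul1n.
by rewrite E big_split /= E1.
Qed.

Lemma sum_pos_exP (P : pred T) (F : T -> nat) : (0 < \sum_(y | P y) F y)%N -> exists y, P y /\ (0 < F y)%N.
Proof.
move=> h; apply: NNPP => hn; move: h; rewrite big1 // => y Py.
by apply/eqP; rewrite -leqn0 leqNgt; apply/negP => hy; apply: hn; exists y.
Qed.

Lemma matching_ex : forall n (Ds Dt : mset T), msize Ds = n -> msize Dt = n ->
  exists M : T -> T -> nat, is_matching Ds Dt M.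
Proof.
elim=> [|n IH] Ds Dt hs ht.
  exists (fun _ _ => 0%N); split => v; rewrite big1 //.
    by apply/esym/eqP; move: hs => /eqP; rewrite /msize sum_nat_eq0 => /forallP /(_ v).
  by apply/esym/eqP; move: ht => /eqP; rewrite /msize sum_nat_eq0 => /forallP /(_ v).
have [a ha] : exists a, (0 < Ds a)%N by apply: sum_pos_ex; rewrite -/(msize Ds) hs.
have [b hb] : exists b, (0 < Dt b)%N by apply: sum_pos_ex; rewrite -/(msize Dt) ht.
have := IH (fun v => Ds v - (v == a))%N (fun v => Dt v - (v == b))%N.
rewrite /msize; move: (sum_minus1 ha) (sum_minus1 hb); rewrite -/(msize Ds) -/(msize Dt) hs ht.
move=> e1 e2; case; [lia|lia|] => M [hr hc].
exists (fun x y => M x y + ((x, y) == (a, b)))%N; split => v.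
  rewrite big_split /= hr sum_row1; move: ha; case: eqP => [->|_]; lia.
rewrite big_split /= hc sum_col1; move: hb; case: eqP => [->|_]; lia.
Qed.

Definition adm (Ds Dt : mset T) (M : T -> T -> nat) :=
  min_cost_matching e Ds Dt M /\ forall v, M v v = minn (Ds v) (Dt v).

Lemma diag_le_row (M : T -> T -> nat) (Ds Dt : mset T) (v : T) : is_matching Ds Dt M -> (M v v <= Ds v)%N /\ (M v v <= Dt v)%N.
Proof.
move=> [hr hc]; rewrite -hr -hc; split.
  by rewrite (bigD1 v) //= leq_addr.
by rewrite (bigD1 v) //= leq_addr.
Qed.

Lemma off_diag_row (M : T -> T -> nat) (Ds Dt : mset T) (v : T) : is_matching Ds Dt M -> (M v v < Ds v)%N ->
  exists y, y != v /\ (0 < M v y)%N.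
Proof.
move=> [hr _] hlt; move: hlt; rewrite -hr (bigD1 v) //= -{1}[M v v]addn0 ltn_add2l.
by move/sum_pos_exP => [y [hy h]]; exists y.
Qed.

Lemma off_diag_col (M : T -> T -> nat) (Ds Dt : mset T) (v : T) : is_matching Ds Dt M -> (M v v < Dt v)%N ->
  exists x, x != v /\ (0 < M x v)%N.
Proof.
move=> [_ hc] hlt; move: hlt; rewrite -hc (bigD1 v) //= -{1}[M v v]addn0 ltn_add2l.
by move/sum_pos_exP => [x [hx h]]; exists x.
Qed.

Lemma adm_ex (Ds Dt : mset T) : msize Ds = msize Dt -> exists M, adm Ds Dt M.
Proof.
move=> hsz; have [M0 hM0] := matching_ex hsz (erefl _).
have [c [[Mc [hMc hc]] hcmin]] := @prop_min (fun n => exists M, is_matching Ds Dt M /\ mcost e M = n)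
  (ex_intro _ _ (ex_intro _ M0 (conj hM0 (erefl _)))).
have hmc : min_cost_matching e Ds Dt Mc.
  by split => // M' hM'; rewrite hc; apply: hcmin; exists M'.
have hB : forall k, (exists M : T -> T -> nat, min_cost_matching e Ds Dt M /\ (\sum_(v : T) M v v)%N = k) ->
    (k <= msize Ds)%N.
  move=> _ [M [hM <-]]; rewrite /msize; apply: leq_sum => v _.
  exact: (proj1 (diag_le_row v (proj1 hM))).
have [k [[M [hM hk]] hkmax]] := prop_max (ex_intro _ _ (ex_intro _ Mc (conj hmc (erefl _)))) hB.
exists M; split => // v.
have [h1 h2] := diag_le_row v (proj1 hM).
apply/eqP; rewrite eqn_leq leq_min h1 h2 /= leqNgt; apply/negP => hlt.
have [y [hyv hy]] : exists y, y != v /\ (0 < M v y)%N.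
  by apply: (off_diag_row (proj1 hM)); apply: leq_trans hlt (geq_minl _ _).
have [x [hxv hx]] : exists x, x != v /\ (0 < M x v)%N.
  by apply: (off_diag_col (proj1 hM)); apply: leq_trans hlt (geq_minr _ _).
have hne : (v, y) != (x, v) by rewrite xpair_eqE negb_and hyv orbT.
set M' := exch M v y x v.
have hM' : is_matching Ds Dt M' by apply: exch_matching => //; case: hM.
have hcost := exch_cost hy hx hne.
have hmin' : min_cost_matching e Ds Dt M'.
  split => // M2 hM2; apply: leq_trans _ (proj2 hM _ hM2).
  have := dist_tri e_conn x v y; rewrite (dist0 e_conn) addn0 in hcost; rewrite /M' => htri.
  by rewrite -(leq_add2r (d v y + d x v)) addnA hcost [(d v y + _)%N]addnC leq_add2l.
have := hkmax _ (ex_intro _ M' (conj hmin' (erefl _))).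
rewrite -hk; apply/negP; rewrite -ltnNge.
have hvy : (v == y) = false by rewrite eq_sym (negbTE hyv).
have hvx : (v == x) = false by rewrite eq_sym (negbTE hxv).
have pw : forall u, (M u u + (u == v) <= M' u u)%N.
  move=> u; rewrite /M' /exch !xpair_eqE; case: (u =P v) => [->|/eqP huv].
    rewrite hvy hvx /=; lia.
  rewrite !andbF /=; lia.
have E1 : (\sum_(u : T) nat_of_bool (u == v) = 1)%N.
  rewrite -(sum_eq1 (fun _ => 1%N) v); apply: eq_bigr => u _; by rewrite mul1n.
have : (\sum_(u : T) (M u u + (u == v)) <= \sum_(u : T) M' u u)%N by apply: leq_sum => u _; apply: pw.
by rewrite big_split /= E1 addn1.
Qed.

End Matching.
Section Core.
Variables (T : finType) (e : rel T).
Hypothesis e_sym : symmetric e.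
Hypothesis e_irr : irreflexive e.
Hypothesis e_conn : connected_graph e.
Variables (l r : T -> rat).
Hypothesis hI : forall x, (l x <= r x)%R.
Hypothesis hE : forall x y, x != y -> e x y = ((l x <= r y)%R && (l y <= r x)%R).
Local Notation d := (dist e).

Definition domv (u x : T) := u = x \/ e u x.

Lemma dom_int u x : domv u x -> (l u <= r x)%R /\ (l x <= r u)%R.
Proof. case=> [->|h]; first by have := hI x; split. exact: (edge_int e_irr hE h). Qed.

Lemma ndom_int u x : ~ domv u x -> (r u < l x)%R \/ (r x < l u)%R.
Proof.
move=> h; case: (eqVneq u x) => [hux|hux]; first by exfalso; apply: h; left.
have : ~~ e u x by apply/negP => h'; apply: h; right.
rewrite hE // negb_and -!ltNge => /orP[h1|h1]; by [right|left].
Qed.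

Lemma int_dom u x : (l u <= r x)%R -> (l x <= r u)%R -> domv u x.
Proof.
move=> h1 h2; case: (eqVneq u x) => [->|hux]; first by left.
by right; apply: (int_edge hE).
Qed.

Lemma edge_dom u x : e u x -> domv u x.
Proof. by right. Qed.

Lemma domv_sym u x : domv u x -> domv x u.
Proof. by case=> [->|h]; [left|right; rewrite e_sym]. Qed.

Definition rank (x : T) := #|[pred z | (r z < r x)%R]|.

Lemma rank_lt a b : (r a < r b)%R -> (rank a < rank b)%N.
Proof.
move=> hab; apply: proper_card; apply/properP; split.
  apply/subsetP => z; rewrite !inE => hz; lra.
by exists a; rewrite !inE // ltxx.
Qed.

Lemma rank_card x : (rank x < #|T|)%N.
Proof.
have := @proper_card T [pred z | (r z < r x)%R] predT.
rewrite /rank; apply; apply/properP; split; first by apply/subsetP.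
by exists x; rewrite !inE // ltxx.
Qed.

Lemma rank_le a b : (rank a <= rank b)%N -> (r a <= r b)%R.
Proof. move=> h; rewrite leNgt; apply/negP => /rank_lt; by rewrite ltnNge h. Qed.

Lemma argmax (P : T -> Prop) x0 : P x0 -> exists g, P g /\ forall y, P y -> (r y <= r g)%R.
Proof.
move=> P0.
have [n [[g [Pg hg]] hn]] := @prop_max (fun n => exists g, P g /\ rank g = n) #|T|
  (ex_intro _ _ (ex_intro _ x0 (conj P0 (erefl _))))
  (fun n '(ex_intro g (conj _ hg)) => eq_ind _ (fun n => (n <= #|T|)%N) (ltnW (rank_card g)) _ hg).
exists g; split => // y Py; apply: rank_le; rewrite hg; apply: hn; by exists y.
Qed.

Lemma argmin (P : T -> Prop) x0 : P x0 -> exists g, P g /\ forall y, P y -> (r g <= r y)%R.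
Proof.
move=> P0.
have [n [[g [Pg hg]] hn]] := @prop_min (fun n => exists g, P g /\ rank g = n)
  (ex_intro _ _ (ex_intro _ x0 (conj P0 (erefl _)))).
exists g; split => // y Py; apply: rank_le; rewrite hg; apply: hn; by exists y.
Qed.

End Core.
Section Dom.
Variables (T : finType) (e : rel T).
Hypothesis e_sym : symmetric e.
Hypothesis e_conn : connected_graph e.
Local Notation d := (dist e).

Lemma dom_slide_multi (D : mset T) a b : dominating e D -> (2 <= D a)%N -> dominating e (slide D a b).
Proof.
move=> hD h2 v; have [u [hu huv]] := hD v; exists u; split => //.
rewrite /slide /=; case: (eqVneq u a) => [->|hua]; lia.
Qed.

Lemma dom_fail (D : mset T) a b : dominating e D -> D a = 1%N -> a != b ->
  ~ dominating e (slide D a b) ->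
  exists x, domv e a x /\ ~ domv e b x /\ forall u, u != a -> (1 <= D u)%N -> ~ domv e u x.
Proof.
move=> hD h1 hab hn.
have [x hx] : exists x, ~ exists u, (1 <= slide D a b u)%N /\ (u = x \/ e u x).
  by apply: NNPP => h; apply: hn => v; apply: NNPP => h'; apply: h; exists v.
exists x; split; last split.
- have [u [hu hux]] := hD x; case: (eqVneq u a) => [<-//|hua].
  exfalso; apply: hx; exists u; split => //; rewrite /slide /= (negbTE hua); lia.
- move=> hbx; apply: hx; exists b; split => //; rewrite /slide /=; rewrite eqxx eq_sym (negbTE hab); lia.
- move=> u hua hu hux; apply: hx; exists u; split => //; rewrite /slide /= (negbTE hua); lia.
Qed.

Lemma adm_pair (Ds Dt : mset T) M u v : adm e Ds Dt M -> (0 < M u v)%N -> u != v ->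
  (Dt u < Ds u)%N /\ (Ds v < Dt v)%N.
Proof.
move=> [[[hr hc] _] hd] huv hne.
have h1 : (M u u + M u v <= Ds u)%N.
  by rewrite -hr (bigD1 u) //= (bigD1 v) 1?eq_sym //= addnA leq_addr.
have h2 : (M v v + M u v <= Dt v)%N.
  by rewrite -hc (bigD1 v) //= (bigD1 u) //= addnA leq_addr.
move: (hd u) (hd v) => e1 e2; lia.
Qed.

Lemma swap_adm (Ds Dt : mset T) M a b c d' : adm e Ds Dt M -> (0 < M a b)%N -> (0 < M c d')%N ->
  a != d' -> c != b -> a != b -> c != d' -> (a, b) != (c, d') ->
  (d a d' + d c b <= d a b + d c d')%N -> adm e Ds Dt (exch M a b c d').
Proof.
move=> [[hM hmin] hd] h1 h2 n1 n2 n3 n4 hne hle; split; first split.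
- exact: exch_matching.
- move=> M2 hM2; apply: leq_trans _ (hmin _ hM2).
  have := exch_cost e h1 h2 hne; lia.
- move=> v; rewrite /exch !xpair_eqE -hd.
  have F : forall p q, p != q -> (v == p) && (v == q) = false.
    by move=> p q hpq; apply/negP => /andP[/eqP k1 /eqP k2]; rewrite -k1 -k2 eqxx in hpq.
  rewrite (F _ _ n1) (F _ _ n2) (F _ _ n3) (F _ _ n4) /=; lia.
Qed.

End Dom.
Ltac purge := repeat match goal with H : _ |- _ => clear H end.

Section Core2.
Variables (T : finType) (e : rel T).
Hypothesis e_sym : symmetric e.
Hypothesis e_irr : irreflexive e.
Hypothesis e_conn : connected_graph e.
Variables (l r : T -> rat).
Hypothesis hI : forall x, (l x <= r x)%R.
Hypothesis hE : forall x y, x != y -> e x y = ((l x <= r y)%R && (l y <= r x)%R).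
Local Notation d := (dist e).
Local Notation MLe := (ML e_sym e_irr e_conn hI hE).
Local Notation DI := (dom_int e_irr hI hE).
Local Notation NDI := (ndom_int hE).
Local Notation EI := (edge_int e_irr hE).

Definition concl (Ds Dt : mset T) (M : T -> T -> nat) :=
  (exists u v u', (0 < M u v)%N /\ succ e u v u' /\ dominating e (slide Ds u u'))
  \/ (exists u v v', (0 < M u v)%N /\ succ e v u v' /\ dominating e (slide Dt v v')).

Lemma domv_edge u x : domv e u x -> u != x -> e u x.
Proof. by case=> [->|//]; rewrite eqxx. Qed.

Lemma ndomv u x : u != x -> ~~ e u x -> ~ domv e u x.
Proof. by move=> h1 h2 [h|h]; [move: h1; rewrite h eqxx | move: h2; rewrite h]. Qed.

Lemma exch_pos (M : T -> T -> nat) a b c d' : c != a -> b != d' ->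
  (0 < exch M a b c d' a d')%N.
Proof.
move=> hca hbd; rewrite /exch !xpair_eqE !eqxx /= [a == c]eq_sym (negbTE hca) [d' == b]eq_sym (negbTE hbd) /=.
lia.
Qed.

Lemma core (Ds Dt : mset T) (s : T) : dominating e Ds -> dominating e Dt -> msize Ds = msize Dt ->
  (Dt s < Ds s)%N -> (forall v, Ds v != Dt v -> (r s <= r v)%R) ->
  exists M, min_cost_matching e Ds Dt M /\ concl Ds Dt M.
Proof.
move=> hDs hDt hsz hs hmin.
have hminS : forall v, (Dt v < Ds v)%N -> (r s <= r v)%R.
  by move=> v hv; apply: hmin; rewrite eq_sym neq_ltn hv.
have hminT : forall v, (Ds v < Dt v)%N -> (r s <= r v)%R.
  by move=> v hv; apply: hmin; rewrite neq_ltn hv.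
pose N := #|T|.
pose pot (t : T) := (d s t * N + rank r t)%N.
have [M0 hM0] := adm_ex e_conn hsz.
have [t0 [ht0 hMt0]] : exists t, t != s /\ (0 < M0 s t)%N.
  apply: (off_diag_row hM0.1.1); rewrite hM0.2; move: hs; purge; lia.
have [n [[M [t [hM [hts [hMst hpot]]]]] hnmin]] := @prop_min
  (fun n => exists M t, adm e Ds Dt M /\ t != s /\ (0 < M s t)%N /\ pot t = n)
  (ex_intro _ _ (ex_intro _ M0 (ex_intro _ t0 (conj hM0 (conj ht0 (conj hMt0 (erefl _))))))).
have better : forall M' t', adm e Ds Dt M' -> t' != s -> (0 < M' s t')%N -> (pot t' < pot t)%N -> False.
  move=> M' t' h1 h2 h3 h4; have := hnmin (pot t') (ex_intro _ M' (ex_intro _ t' (conj h1 (conj h2 (conj h3 (erefl _)))))).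
  by rewrite -hpot leqNgt h4.
exists M; split; first exact: hM.1.
have hst : s != t by rewrite eq_sym.
have [_ htT] := adm_pair hM hMst hst.
have hrt : (r s <= r t)%R := hminT t htT.
have [hs2|hs1] := leqP 2 (Ds s).
  left; have [u' hu'] := succ_ex e_conn hst; exists s, t, u'; split => //; split => //.
  exact: dom_slide_multi.
have [ht2|ht1] := leqP 2 (Dt t).
  right; have [v' hv'] := succ_ex e_conn hts; exists s, t, v'; split => //; split => //.
  exact: dom_slide_multi.
have Ds1 : Ds s = 1%N by move: hs hs1; purge; lia.
have Dt1 : Dt t = 1%N by move: htT ht1; purge; lia.
have Dts0 : Dt s = 0%N by move: hs Ds1; purge; lia.
have getw : forall x, domv e s x -> (forall u, u != s -> (1 <= Ds u)%N -> ~ domv e u x) ->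
    exists w, [/\ domv e w x, w != s, (Ds w < Dt w)%N & (1 <= Dt w)%N].
  move=> x hsx hox; have [w [hw hwx]] := hDt x; exists w.
  have hws : w != s by apply/eqP => hws; move: hw; rewrite hws Dts0.
  split => //; rewrite ltnNge; apply/negP => hle.
  by apply: (hox w hws); [move: hle hw; purge; lia|].
(* the partner z of w and the improved matching *)
have improve : forall w, w != s -> w != t -> (Ds w < Dt w)%N -> (d s w <= 1)%N ->
    (forall z, z != s -> z != w -> (Dt z < Ds z)%N -> (d z t + d s w <= d s t + d z w)%N) ->
    (d s w * N + rank r w < pot t)%N -> False.
  move=> w hws hwt hwT hsw hcost hlt.
  have hMww : (M w w < Dt w)%N by rewrite hM.2; move: hwT; purge; lia.
  have [z [hzw hMzw]] := off_diag_col hM.1.1 hMww.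
  have [hzS _] := adm_pair hM hMzw hzw.
  case: (eqVneq z s) => [hzs|hzs].
    by apply: (better M w) => //; rewrite -?hzs //.
  have hzt : z != t by apply/eqP => hzt; move: hzS htT; rewrite hzt; lia.
  have hsw' : s != w by rewrite eq_sym.
  have hne : (s, t) != (z, w) by rewrite xpair_eqE negb_and eq_sym hzs.
  have hc := hcost z hzs hzw hzS.
  apply: (better (exch M s t z w) w) => //.
  - by apply: swap_adm => //; rewrite addnC.
  - by apply: exch_pos; rewrite // eq_sym.
have hNpos : (0 < N)%N by apply: leq_ltn_trans (rank_card r s).
case: (boolP (e s t)) => [est|nest].
  have dst : d s t = 1%N by apply/eqP; rewrite eqn_leq (dist_edge e_conn est) dist_pos.
  have [hdom1|hndom1] := classic (dominating e (slide Ds s t)).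
    left; exists s, t, t; split => //; split => //.
    by apply: succ_of => //; rewrite ?(dist0 e_conn) dst.
  have [hdom2|hndom2] := classic (dominating e (slide Dt t s)).
    right; exists s, t, s; split => //; split => //.
    apply: succ_of => //; first by rewrite e_sym.
      by rewrite (dist0 e_conn) (dist_sym e_sym e_conn) dst.
    by rewrite (dist_sym e_sym e_conn) dst.
  exfalso.
  have [x [hsx [hntx hox]]] := dom_fail hDs Ds1 hst hndom1.
  have [y [hty [hnsy hoy]]] := dom_fail hDt Dt1 hts hndom2.
  have [w [hwx hws hwT hw1]] := getw x hsx hox.
  have hwt : w != t by apply/eqP => hwt; apply: hntx; rewrite -hwt.
  have hnwy := hoy w hwt hw1.
  have [i1 i2] := DI hsx; have [i3 i4] := DI hwx; have [i5 i6] := DI hty.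
  have [i7 i8] := EI est; have i9 := hI x; have i10 := hI y; have i11 := hminT w hwT.
  have j1 : (r x < l t)%R by case: (NDI hntx) => h; lra.
  have j2 : (r s < l y)%R by case: (NDI hnsy) => h; lra.
  have j3 : (r w < l y)%R by case: (NDI hnwy) => h; lra.
  have rwt : (r w < r t)%R by lra.
  have esw : e s w.
    by apply: domv_edge; [apply: (int_dom hE); lra | rewrite eq_sym].
  apply: (improve w hws hwt hwT (dist_edge e_conn esw)).
    move=> z hzs hzw hzS; have hrz := hminS z hzS.
    have dzw : (1 <= d z w)%N by apply: dist_pos.
    rewrite dst; have := dist_edge e_conn esw.
    case: (boolP (e z t)) => [ezt|nezt].
      by move=> h1; move: h1 (dist_edge e_conn ezt) dzw; purge; lia.
    have hzt : z != t by apply/eqP => hzt; move: hzS htT; rewrite hzt; purge; lia.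
    have i12 : (r t < l z)%R by case: (NDI (ndomv hzt nezt)) => h; lra.
    have : (d t z <= d w z)%N by apply: MLe; lra.
    rewrite (dist_sym e_sym e_conn t) (dist_sym e_sym e_conn w); purge; lia.
  rewrite /pot dst; have := rank_lt rwt; have := dist_edge e_conn esw.
  have : (d s w * N <= N)%N.
    by rewrite -[X in (_ <= X)%N]mul1n leq_mul2r (dist_edge e_conn esw) orbT.
  purge; nia.
have [z0 hz0] := succ_ex e_conn hst.
have hsz0 : e s z0 by case: hz0 => p /and3P[/andP[]].
have [g [hsg hgmax]] := @argmax T r (fun g => e s g) z0 hsz0.
have hsg' : s != g := edge_neq e_irr hsg.
have hlt_st : (r s < l t)%R.
  have := hI s; case: (NDI (ndomv hst nest)) => h; lra.
have dst1 : (1 <= d s t)%N by apply: dist_pos.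
have dst2 : (2 <= d s t)%N.
  rewrite ltn_neqAle dst1 andbT; apply/eqP => h.
  by move: nest; rewrite (dist1_edge e_conn (esym h)).
have hgsucc : succ e s t g.
  apply: succ_of => //.
  apply/eqP; rewrite eqn_leq; apply/andP; split; last first.
    have := dist_tri e_conn s g t; have := dist_edge e_conn hsg; purge; lia.
  case: (dist_ex e_conn s t) => [[|p1 p]] [/= pp lp sp]; first by move: sp dst1; purge; lia.
  move: pp => /andP[hsp1 pp].
  have hp1g := hgmax _ hsp1.
  case: (boolP (e g t)) => [egt|negt].
    by move: (dist_edge e_conn egt) dst2; purge; lia.
  have hgt : g != t by apply/eqP => hgt; move: nest; rewrite -hgt hsg.
  have [i1 i2] := EI hsg.
  have i3 : (r g < l t)%R by case: (NDI (ndomv hgt negt)) => h; lra.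
  have : (d g t <= d p1 t)%N by apply: MLe; lra.
  have := dist_path e_conn pp; rewrite lp; move: sp; purge; lia.
have [hdom1|hndom1] := classic (dominating e (slide Ds s g)).
  by left; exists s, t, g.
exfalso.
have [x [hsx [hngx hox]]] := dom_fail hDs Ds1 hsg' hndom1.
have [w [hwx hws hwT hw1]] := getw x hsx hox.
have hsx' : e s x.
  apply: domv_edge => //; apply/eqP => hsx'; apply: hngx; rewrite -hsx'.
  by right; rewrite e_sym.
have hxg := hgmax _ hsx'.
have [i1 i2] := DI hsx; have [i3 i4] := DI hwx; have [i5 i6] := EI hsg; have i7 := hI x.
have i8 := hminT w hwT.
have j1 : (r x < l g)%R by case: (NDI hngx) => h; lra.
have esw : e s w.
  by apply: domv_edge; [apply: (int_dom hE); lra | rewrite eq_sym].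
have hwt : w != t by apply/eqP => hwt; move: nest; rewrite -hwt esw.
apply: (improve w hws hwt hwT (dist_edge e_conn esw)).
  move=> z hzs hzw hzS; have hrz := hminS z hzS.
  have dzw : (1 <= d z w)%N by apply: dist_pos.
  have := dist_edge e_conn esw.
  case: (boolP (e w t)) => [ewt|newt].
    have := dist_edge e_conn ewt; have := dist_tri e_conn z w t; move: dzw dst2; purge; lia.
  have j2 : (r w < l t)%R by case: (NDI (ndomv hwt newt)) => h; lra.
  case: (boolP (e z t)) => [ezt|nezt].
    by move=> h1; move: h1 (dist_edge e_conn ezt) dzw dst2; purge; lia.
  have hzt : z != t by apply/eqP => hzt; move: hzS htT; rewrite hzt; purge; lia.
  case: (NDI (ndomv hzt nezt)) => j3.
    have : (d z t <= d s t)%N by apply: MLe; lra.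
    move: dzw; purge; lia.
  have : (d t z <= d w z)%N by apply: MLe; have := hI t; lra.
  rewrite (dist_sym e_sym e_conn t) (dist_sym e_sym e_conn w); move: dzw dst2; purge; lia.
rewrite /pot; have := rank_card r w.
have : (d s w * N <= N)%N.
  by rewrite -[X in (_ <= X)%N]mul1n leq_mul2r (dist_edge e_conn esw) orbT.
have : (2 * N <= d s t * N)%N by rewrite leq_mul2r dst2 orbT.
purge; nia.
Qed.

End Core2.
Lemma mcost_tr (T : finType) (e : rel T) (e_sym : symmetric e) (e_conn : connected_graph e)
  (M : T -> T -> nat) : mcost e (fun u v => M v u) = mcost e M.
Proof.
rewrite /mcost exchange_big /=; apply: eq_bigr => x _; apply: eq_bigr => y _.
by rewrite (dist_sym e_sym e_conn).
Qed.

Lemma min_cost_tr (T : finType) (e : rel T) (e_sym : symmetric e) (e_conn : connected_graph e)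
  (Ds Dt : mset T) (M : T -> T -> nat) :
  min_cost_matching e Dt Ds M -> min_cost_matching e Ds Dt (fun u v => M v u).
Proof.
move=> [[hr hc] hmin]; split; first by split.
move=> M' [hr' hc']; rewrite mcost_tr //.
rewrite -[mcost e M'](mcost_tr e_sym e_conn M'); apply: hmin; by split.
Qed.

Theorem mainTheorem8 (T : finType) (e : rel T)
    (e_sym : symmetric e) (e_irr : irreflexive e)
    (e_int : interval_graph e) (e_conn : connected_graph e)
    (Ds Dt : mset T) :
  dominating e Ds -> dominating e Dt -> Ds <> Dt -> msize Ds = msize Dt ->
  exists M : T -> T -> nat,
    min_cost_matching e Ds Dt M /\
    ((exists u v u', (0 < M u v)%N /\ succ e u v u' /\ dominating e (slide Ds u u'))
     \/
     (exists u v v', (0 < M u v)%N /\ succ e v u v' /\ dominating e (slide Dt v v'))).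
Proof.
move=> hDs hDt hne hsz.
case: e_int => I [hI hE].
pose l x := (I x).1; pose r x := (I x).2.
have hI' : forall x, (l x <= r x)%R by [].
have hE' : forall x y, x != y -> e x y = ((l x <= r y)%R && (l y <= r x)%R) by [].
have [v0 hv0] : exists v, Ds v <> Dt v.
  apply: NNPP => h; apply: hne; apply: functional_extensionality => v.
  by apply: NNPP => h'; apply: h; exists v.
have [s [hs hsmin]] := @argmin T r (fun v => Ds v <> Dt v) v0 hv0.
have hmin : forall v, Ds v != Dt v -> (r s <= r v)%R.
  by move=> v /eqP hv; apply: hsmin.
case: (ltngtP (Dt s) (Ds s)) => [hlt|hlt|heq]; last by exfalso; apply: hs.
  exact: (core e_sym e_irr e_conn hI' hE' hDs hDt hsz hlt hmin).
have hmin' : forall v, Dt v != Ds v -> (r s <= r v)%R by move=> v; rewrite eq_sym; apply: hmin.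
have [M [hM hc]] := core e_sym e_irr e_conn hI' hE' hDt hDs (esym hsz) hlt hmin'.
exists (fun u v => M v u); split; first exact: min_cost_tr.
case: hc => [[u [v [u' [h1 [h2 h3]]]]]|[u [v [v' [h1 [h2 h3]]]]]].
  by right; exists v, u, u'.
by left; exists v, u, v'.
Qed.
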